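(* Let $R$ be a commutative Noetherian ring with unity such that $\Gamma_E(R)$ has at least three vertices. Then $\Gamma_E(R)$ is not a complete graph.
   Context: For $x,y\in R$ write $x\sim y$ iff $\operatorname{ann}(x)=\operatorname{ann}(y)$; $[x]$ denotes the equivalence class of $x$. Let $Z^*(R)$ be the set of nonzero zero divisors of $R$. The graph $\Gamma_E(R)$ is the simple graph whose vertices are the classes $[x]$ with $x\in Z^*(R)$, two distinct vertices $[x],[y]$ being adjacent iff $xy=0$ (this is independent of representatives). *)

(* Defs.v *)
From mathcomp Require Import all_boot all_order all_algebra.
Set Implicit Arguments. Unset Strict Implicit. Unset Printing Implicit Defensive.
Import GRing.Theory.
Local Open Scope ring_scope.

Definition is_ideal (R : comPzRingType) (I : R -> Prop) : Prop :=
  [/\ I 0, (forall x y, I x -> I y -> I (x - y)) & (forall r x, I x -> I (r * x))].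

Definition noetherian (R : comPzRingType) : Prop :=
  forall I : nat -> R -> Prop,
    (forall n, is_ideal (I n)) ->
    (forall n x, I n x -> I n.+1 x) ->
    exists N, forall n, (N <= n)%N -> forall x, I n x <-> I N x.

Definition ann (R : comPzRingType) (x : R) : R -> Prop := fun r => x * r = 0.

Definition ann_equiv (R : comPzRingType) (x y : R) : Prop :=
  forall r, ann x r <-> ann y r.

Definition nz_zero_divisor (R : comPzRingType) (x : R) : Prop :=
  x <> 0 /\ exists y : R, y <> 0 /\ x * y = 0.

(* Gamma_E(R) has at least three vertices: three pairwise distinct classes
   [x],[y],[z] with x,y,z in Z*(R). *)
Definition GammaE_at_least_three_vertices (R : comPzRingType) : Prop :=
  exists x y z : R,
    [/\ nz_zero_divisor x, nz_zero_divisor y & nz_zero_divisor z] /\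
    [/\ ~ ann_equiv x y, ~ ann_equiv x z & ~ ann_equiv y z].

Definition GammaE_adj (R : comPzRingType) (x y : R) : Prop :=
  ~ ann_equiv x y /\ x * y = 0.

Definition GammaE_complete (R : comPzRingType) : Prop :=
  forall x y : R, nz_zero_divisor x -> nz_zero_divisor y ->
    ~ ann_equiv x y -> GammaE_adj x y.

(* Main.v *)
Require Import Defs.
From mathcomp Require Import all_boot all_order all_algebra.
From Stdlib Require Import Classical ClassicalEpsilon.
Set Implicit Arguments. Unset Strict Implicit.
Import GRing.Theory.
Local Open Scope ring_scope.

Lemma ann_ideal (R : comPzRingType) (w : R) : is_ideal (ann w).
Proof.
rewrite /ann; split.
- by rewrite mulr0.
- by move=> x y hx hy; rewrite mulrBr hx hy subrr.
- by move=> r x hx; rewrite mulrCA hx mulr0.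
Qed.

Lemma max_ann (R : comPzRingType) (x0 : R) : x0 <> 0 -> noetherian R ->
  exists a : R, a <> 0 /\ forall w, w <> 0 -> (forall r, ann a r -> ann w r) ->
     forall r, ann w r -> ann a r.
Proof.
move=> hx0 hN; apply: NNPP => H.
have Hex : forall w : R, exists w' : R, w <> 0 ->
   w' <> 0 /\ (forall r, ann w r -> ann w' r) /\ ~ (forall r, ann w' r -> ann w r).
  move=> w; case: (classic (w = 0)) => [->|hw]; first by exists 0.
  apply: NNPP => K; apply: H; exists w; split => // v hv hsub.
  apply: NNPP => K2; apply: K; exists v => _; split=> //; split=> //.
pose f w := proj1_sig (constructive_indefinite_description _ (Hex w)).
have hf w : w <> 0 -> f w <> 0 /\ (forall r, ann w r -> ann (f w) r) /\
    ~ (forall r, ann (f w) r -> ann w r).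
  by move=> hw; rewrite /f; case: constructive_indefinite_description => /= w' /(_ hw).
pose s n := iter n f x0.
have hs n : s n <> 0 by elim: n => [|n IH] //=; have [] := hf _ IH.
have [N HN] := hN (fun n => ann (s n)) (fun n => ann_ideal (s n))
  (fun n x hx => proj1 (proj2 (hf _ (hs n))) x hx).
have [_ [_ hno]] := hf _ (hs N); apply: hno => r hr.
by have /(_ r) [h _] := HN N.+1 (leqnSn N); exact: h.
Qed.

Theorem proposition1p5 (R : comPzRingType) :
  noetherian R -> GammaE_at_least_three_vertices R -> ~ GammaE_complete R.
Proof.
move=> hN [x [y [z [[hx hy hz] [nxy nxz nyz]]]]] hC.
have [a [ha amax]] := max_ann (proj1 hx) hN.
have L : forall u, u <> 0 -> ~ ann_equiv u a -> exists p, a * p = 0 /\ u * p <> 0.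
  move=> u hu0 nua; apply: NNPP => K.
  have sub : forall q, ann a q -> ann u q.
    by move=> q hq; apply: NNPP => K3; apply: K; exists q.
  by apply: nua => r; split => hr; [exact: amax u hu0 sub r hr | exact: sub].
have key : forall u, nz_zero_divisor u -> ~ ann_equiv u a -> u * u <> 0.
  move=> u hu nua huu.
  have [p [hap hup]] := L u (proj1 hu) nua.
  have hp : nz_zero_divisor p.
    split; first by move=> p0; apply: hup; rewrite p0 mulr0.
    by exists a; split => //; rewrite mulrC.
  case: (classic (ann_equiv u p)) => [e|ne].
    by apply: hup; have /(_ u) [h _] := e; rewrite mulrC; apply: h.
  by have [_ ] := hC u p hu hp ne.
have sym : forall s t : R, ann_equiv s t -> ann_equiv t s.
  by move=> s t e r; have := e r; tauto.
have tr : forall s t w : R, ann_equiv s t -> ann_equiv t w -> ann_equiv s w.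
  by move=> s t w e1 e2 r; have := e1 r; have := e2 r; tauto.
have two : exists u v, [/\ nz_zero_divisor u, nz_zero_divisor v, ~ ann_equiv u v,
    ~ ann_equiv u a & ~ ann_equiv v a].
  case: (classic (ann_equiv x a)) => xa.
    exists y, z; split => // => [ya|za].
      exact: nxy (tr _ _ _ xa (sym _ _ ya)).
    exact: nxz (tr _ _ _ xa (sym _ _ za)).
  case: (classic (ann_equiv y a)) => ya.
    exists x, z; split => // za; exact: nyz (tr _ _ _ ya (sym _ _ za)).
  by exists x, y; split.
have [u [v [hu hv nuv nua nva]]] := two.
have [_ huv] := hC u v hu hv nuv.
have k1 := key u hu nua; have k2 := key v hv nva.
have ha' : nz_zero_divisor a.
  have [p [hap hup]] := L u (proj1 hu) nua.
  split => //; exists p; split => // p0; apply: hup; by rewrite p0 mulr0.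
have [_ hua] := hC u a hu ha' nua.
have [_ hva] := hC v a hv ha' nva.
have hw : nz_zero_divisor (u + v).
  split.
    move=> e; apply: k1; have : u * (u + v) = 0 by rewrite e mulr0.
    by rewrite mulrDr huv addr0.
  by exists a; split => //; rewrite mulrDl hua hva addr0.
case: (classic (ann_equiv (u + v) u)) => [e|ne].
  apply: k2; have /(_ v) [_ h] := e.
  have := h huv; rewrite /ann mulrDl.
  by rewrite huv add0r.
have [_ h] := hC (u + v) u hw hu ne.
by apply: k1; move: h; rewrite mulrDl [v * u]mulrC huv addr0.
Qed.
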